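(* Let $a>0$, $\epsilon>0$, $n\in\mathbb{N}$, $\sigma_n=n^{-a}$, and consider the pendulum Lagrangian $A_n(q_1,\dot q_1)=\frac12|\dot q_1|^2+\sigma_n(1-\cos q_1)$ on $\mathbb{R}$ with associated Hamiltonian $h_n(q_1,p_1)=\frac12|p_1|^2-\sigma_n(1-\cos q_1)$. Let $t_0<\bar t_1$ and let $\bar q_1$ be the solution of the Euler–Lagrange equation of $A_n$ on $(t_0,\bar t_1)$ satisfying $\bar q_1(t_0)=0$, $\bar q_1(\bar t_1)=\pi$. Let $e(\bar t_1-t_0)$ denote its energy, i.e. $(\bar q_1,\bar p_1)\in h_n^{-1}(e(\bar t_1-t_0))$ with $\bar p_1=\dot{\bar q}_1$, and let $\omega_1=\pi/(\bar t_1-t_0)$ be the average speed of $\bar q_1$ on $(t_0,\bar t_1)$. If $|\omega_1|<n^{-\frac a2-\epsilon}$, then $$e(\bar t_1-t_0)\sim \sigma_n\exp\Big(-\frac{C\sqrt{\sigma_n}}{|\omega_1|}\Big),$$ where $C$ is a positive constant.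
   Context: The notation $f\sim g$ means $\frac1{C'}g<f<C'g$ for some constant $C'>1$ independent of $n$. *)

(* Defs.v *)
From Stdlib Require Import Reals Lra.
From Coquelicot Require Import Coquelicot.
Open Scope R_scope.

Definition sigma_n (a : R) (n : nat) : R := Rpower (INR n) (- a).

Definition ham (sigma q p : R) : R := / 2 * p ^ 2 - sigma * (1 - cos q).

(* q solves the Euler-Lagrange equation of A_n(q,qdot) = 1/2 qdot^2 + sigma (1 - cos q),
   i.e. q'' = sigma * sin q, on the open interval (t0,t1), and q is continuous on
   the closed interval [t0,t1] (so that boundary values make sense). *)
Definition pendulum_EL_solution (sigma t0 t1 : R) (q : R -> R) : Prop :=
  (forall t, t0 < t < t1 ->
     ex_derive q t /\ is_derive (Derive q) t (sigma * sin (q t))) /\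
  (forall t, t0 <= t <= t1 ->
     filterlim q (within (fun s => t0 <= s <= t1) (locally t)) (locally (q t))).

(* Main.v *)
Require Import Defs.
From Stdlib Require Import Reals Lra.
From Coquelicot Require Import Coquelicot.
Open Scope R_scope.

Lemma ball_R (x e y : R) : ball x e y <-> Rabs (y - x) < e.
Proof. split; intro H; exact H. Qed.

Definition clamp (a b s : R) := Rmax a (Rmin b s).

Lemma clamp_in a b s : a <= b -> a <= clamp a b s <= b.
Proof. intros; unfold clamp, Rmax, Rmin; repeat destruct Rle_dec; lra. Qed.

Lemma clamp_id a b s : a <= s <= b -> clamp a b s = s.
Proof. intros; unfold clamp, Rmax, Rmin; repeat destruct Rle_dec; lra. Qed.

Lemma clamp_lip a b u v : a <= b -> Rabs (clamp a b u - clamp a b v) <= Rabs (u - v).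
Proof. intros; unfold clamp, Rmax, Rmin; repeat destruct Rle_dec;
  repeat (apply Rabs_le || unfold Rabs; repeat destruct Rcase_abs); lra. Qed.

Lemma clamp_cont a b s : a <= b -> continuous (clamp a b) s.
Proof.
  intros Hab P [eps HP]. exists eps. intros y Hy. apply HP.
  apply ball_R. pose proof (proj1 (ball_R _ _ _) Hy) as Hy2. eapply Rle_lt_trans; [apply clamp_lip|]; auto.
Qed.

Lemma clamp_within a b t : a <= t <= b ->
  filterlim (clamp a b) (locally t) (within (fun s => a <= s <= b) (locally t)).
Proof.
  intros Ht P [eps HP]. exists eps. intros y Hy. apply HP.
  - apply ball_R. pose proof (proj1 (ball_R _ _ _) Hy) as Hy2.
    assert (Hl : Rabs (clamp a b y - clamp a b t) <= Rabs (y - t)) by (apply clamp_lip; lra).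
    rewrite (clamp_id a b t Ht) in Hl. lra.
  - apply clamp_in; lra.
Qed.

Lemma qt_cont t0 t1 (q : R -> R) : t0 <= t1 ->
  (forall t, t0 <= t <= t1 -> filterlim q (within (fun s => t0 <= s <= t1) (locally t)) (locally (q t))) ->
  forall t, t0 <= t <= t1 -> continuous (fun s => q (clamp t0 t1 s)) t.
Proof.
  intros H01 Hc t Ht. unfold continuous. rewrite (clamp_id t0 t1 t Ht).
  eapply filterlim_comp; [apply clamp_within; auto| apply Hc; auto].
Qed.

Lemma loc_int t0 t1 x : t0 < x < t1 -> locally x (fun s => t0 < s < t1).
Proof.
  intros Hx. assert (Hp : 0 < Rmin (x - t0) (t1 - x)) by (apply Rmin_glb_lt; lra).
  exists (mkposreal _ Hp). intros y Hy. change (Rabs (y - x) < Rmin (x - t0) (t1 - x)) in Hy.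
  assert (H1 := Rmin_l (x - t0) (t1 - x)). assert (H2 := Rmin_r (x - t0) (t1 - x)).
  unfold Rabs in Hy; destruct Rcase_abs in Hy; lra.
Qed.

Lemma incr_on (g : R -> R) a b : a <= b ->
  (forall x, a <= x <= b -> continuity_pt g x) ->
  (forall x, a < x < b -> exists d, is_derive g x d /\ 0 <= d) -> g a <= g b.
Proof.
  intros Hab Hc Hd. destruct (Req_dec a b) as [->|Hne]; [lra|].
  assert (Hab' : a < b) by lra.
  destruct (MVT_gen g a b (fun x => Rmax 0 (Derive g x))) as [c [Hc1 Hc2]].
  - rewrite Rmin_left, Rmax_right by lra. intros x Hx.
    destruct (Hd x Hx) as [d [H1 H2]]. rewrite (is_derive_unique _ _ _ H1).
    rewrite Rmax_right by lra. exact H1.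
  - rewrite Rmin_left, Rmax_right by lra. auto.
  - assert (0 <= Rmax 0 (Derive g c)) by apply Rmax_l.
    assert (0 <= Rmax 0 (Derive g c) * (b - a)) by (apply Rmult_le_pos; lra). lra.
Qed.

Lemma cont_comp_A (A f : R -> R) x : (forall y, ex_derive A y) -> continuous f x ->
  continuous (fun s => A (f s)) x.
Proof.
  intros HA Hf. apply continuous_comp; auto. apply (ex_derive_continuous (K:=R_AbsRing) (V:=R_NormedModule)); auto.
Qed.

Lemma cont_exp_lin c x : continuous (fun s => exp (c * s)) x.
Proof.
  apply (ex_derive_continuous (K:=R_AbsRing) (V:=R_NormedModule)). auto_derive. auto.
Qed.

Lemma cont_mul (f g : R -> R) x : continuous f x -> continuous g x -> continuous (fun s => f s * g s) x.
Proof. intros. apply (continuous_mult (K:=R_AbsRing)); auto. Qed.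

Lemma cont_opp (f : R -> R) x : continuous f x -> continuous (fun s => - f s) x.
Proof. intros. apply (continuous_opp (K:=R_AbsRing) (V:=R_NormedModule)); auto. Qed.

Lemma cpt (f : R -> R) x : continuous f x -> continuity_pt f x.
Proof. intros; apply continuity_pt_filterlim; auto. Qed.

Lemma core (sg k t0 t1 e : R) (q : R -> R) :
  0 < sg -> k * k = sg -> 0 < k -> t0 < t1 ->
  (forall t, t0 < t < t1 -> ex_derive q t /\ is_derive (Derive q) t (sg * sin (q t))) ->
  (forall t, t0 <= t <= t1 ->
     filterlim q (within (fun s => t0 <= s <= t1) (locally t)) (locally (q t))) ->
  q t0 = 0 -> q t1 = PI ->
  (forall t, t0 < t < t1 -> Derive q t ^ 2 = 2 * e + 4 * sg * sin (q t / 2) ^ 2) ->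
  0 < e /\
  (2 * k + sqrt (2 * e + 4 * sg)) * exp (- k * (t1 - t0)) <= sqrt (2 * e) /\
  sqrt (2 * e) <= (2 * k + sqrt (2 * e + 4 * sg)) * exp (PI / 2) * exp (- k * (t1 - t0)).
Proof.
  intros Hsg Hkk Hk Ht Hd Hc Hq0 Hq1 Hpp.
  set (p := Derive q).
  set (qt := fun s => q (clamp t0 t1 s)).
  assert (Hqt : forall t, t0 <= t <= t1 -> continuous qt t).
  { intros t Htt. apply qt_cont; auto; lra. }
  assert (Hqt0 : qt t0 = 0). { unfold qt. rewrite clamp_id; auto; lra. }
  assert (Hqt1 : qt t1 = PI). { unfold qt. rewrite clamp_id; auto; lra. }
  assert (Hqte : forall s, t0 < s < t1 -> qt s = q s).
  { intros s Hs. unfold qt. rewrite clamp_id; auto; lra. }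
  assert (Hqd : forall x, t0 < x < t1 -> ex_derive q x) by (intros; apply Hd; auto).
  assert (Hpd : forall x, t0 < x < t1 -> is_derive p x (sg * sin (q x))) by (intros; apply Hd; auto).
  assert (Hsin2 : forall y, sin y = 2 * sin (y / 2) * cos (y / 2)).
  { intros y. rewrite <- sin_2a. f_equal. field. }
  destruct (Rle_or_lt e 0) as [He | He].
  { exfalso.
    assert (Hm := incr_on (fun s => - (sin (qt s / 2) ^ 2 * exp (- (2 * k) * s))) t0 t1).
    cbv beta in Hm. rewrite Hqt0, Hqt1 in Hm.
    assert (H0 : 0 / 2 = 0) by field. rewrite H0, sin_0, sin_PI2 in Hm.
    assert (Hex := exp_pos (- (2 * k) * t1)).
    assert (Hm' : - (0 ^ 2 * exp (- (2 * k) * t0)) <= - (1 ^ 2 * exp (- (2 * k) * t1))).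
    2: { nra. }
    apply Hm; [lra| |].
    - intros x Hx. apply cpt. apply cont_opp. apply cont_mul.
      + apply (cont_comp_A (fun y => sin (y / 2) ^ 2) qt).
        * intros y. auto_derive. auto.
        * apply Hqt; auto.
      + apply cont_exp_lin.
    - intros x Hx.
      exists (exp (- (2 * k) * x) * (2 * k * sin (q x / 2) ^ 2 - sin (q x / 2) * cos (q x / 2) * p x)).
      split.
      + apply is_derive_ext_loc with (fun s => - (sin (q s / 2) ^ 2 * exp (- (2 * k) * s))).
        * eapply filter_imp; [|apply (loc_int t0 t1 x Hx)].
          intros s Hs. rewrite (Hqte s Hs). reflexivity.
        * auto_derive. { apply Hqd; auto. }
          unfold p. replace (Derive (fun x0 : R => q x0) x) with (Derive q x) by reflexivity. unfold Rdiv. field.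
      + apply Rmult_le_pos; [left; apply exp_pos|].
        assert (Hp2 := Hpp x Hx). fold p in Hp2.
        assert (Hc1 := COS_bound (q x / 2)).
        set (s := sin (q x / 2)) in *. set (c := cos (q x / 2)) in *.
        assert (Hsp : Rabs (s * p x) <= 2 * k * s ^ 2).
        { apply Rsqr_incr_0_var.
          - rewrite <- Rsqr_abs. unfold Rsqr.
            assert (Hpp2 : p x * p x = 2 * e + 4 * sg * (s * s)) by (replace (s * s) with (s ^ 2) by ring; rewrite <- Hp2; ring).
            assert (Hse : s * s * e <= 0).
            { assert (0 <= s * s) by nra. nra. }
            replace (s * p x * (s * p x)) with (s * s * (p x * p x)) by ring.
            rewrite Hpp2, <- Hkk. nra.
          - nra. }
        assert (Habs : s * c * p x <= Rabs (s * p x)).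
        { destruct (Rle_or_lt 0 (s * p x)).
          - rewrite Rabs_right by lra. nra.
          - rewrite Rabs_left by lra. nra. }
        lra. }
  assert (Hpn : forall x, t0 < x < t1 -> p x <> 0).
  { intros x Hx Hz. assert (Hp2 := Hpp x Hx). fold p in Hp2. rewrite Hz in Hp2.
    assert (0 <= sin (q x / 2) ^ 2) by (apply pow2_ge_0). nra. }
  assert (Hpc : forall x, t0 < x < t1 -> continuous p x).
  { intros x Hx. apply (ex_derive_continuous (K:=R_AbsRing) (V:=R_NormedModule)).
    eexists; apply Hpd; auto. }
  assert (Hpos : forall x, t0 < x < t1 -> 0 < p x).
  { intros x0 Hx0. destruct (Rlt_or_le 0 (p x0)) as [Hl|Hl]; auto. exfalso.
    assert (Hn : p x0 < 0) by (destruct Hl; auto; exfalso; apply (Hpn x0 Hx0); auto).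
    assert (Hall : forall y, t0 < y < t1 -> p y < 0).
    { intros y Hy. destruct (Rlt_or_le (p y) 0) as [Hl2|Hl2]; auto. exfalso.
      assert (Hpy : 0 < p y) by (destruct Hl2; auto; exfalso; apply (Hpn y Hy); auto).
      set (a0 := Rmin x0 y). set (b0 := Rmax x0 y).
      assert (Ha0 : t0 < a0) by (unfold a0, Rmin; destruct (Rle_dec x0 y); lra).
      assert (Hb0 : b0 < t1) by (unfold b0, Rmax; destruct (Rle_dec x0 y); lra).
      assert (Hab : a0 <= b0) by (unfold a0, b0, Rmin, Rmax; destruct (Rle_dec x0 y); lra).
      assert (Hx0a : a0 <= x0 <= b0) by (unfold a0, b0, Rmin, Rmax; destruct (Rle_dec x0 y); lra).
      assert (Hya : a0 <= y <= b0) by (unfold a0, b0, Rmin, Rmax; destruct (Rle_dec x0 y); lra).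
      destruct (IVT_gen (fun s => p (clamp a0 b0 s)) x0 y 0) as [z [Hz1 Hz2]].
      - intros s. apply cpt. apply (continuous_comp (clamp a0 b0) p).
        + apply clamp_cont; auto.
        + apply Hpc. assert (Hcl := clamp_in a0 b0 s Hab). lra.
      - rewrite (clamp_id a0 b0 x0 Hx0a), (clamp_id a0 b0 y Hya).
        unfold Rmin, Rmax; destruct Rle_dec; lra.
      - apply (Hpn (clamp a0 b0 z)); auto. assert (Hcl := clamp_in a0 b0 z Hab). lra. }
    assert (Hm := incr_on (fun s => - qt s) t0 t1).
    cbv beta in Hm. rewrite Hqt0, Hqt1 in Hm.
    assert (Hfin : - 0 <= - PI).
    2: { assert (Hpi := PI_RGT_0). lra. }
    apply Hm; [lra| |].
    - intros x Hx. apply cpt. apply cont_opp. apply Hqt; auto.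
    - intros x Hx. exists (- p x). split.
      + apply is_derive_ext_loc with (fun s => - q s).
        * eapply filter_imp; [|apply (loc_int t0 t1 x Hx)].
          intros s Hs. rewrite (Hqte s Hs). reflexivity.
        * auto_derive. { apply Hqd; auto. }
          unfold p. replace (Derive (fun x0 : R => q x0) x) with (Derive q x) by reflexivity. ring.
      + assert (Hal := Hall x Hx). lra. }
  assert (Hmono : forall u v, t0 <= u -> u <= v -> v <= t1 -> qt u <= qt v).
  { intros u v Hu Huv Hv. apply incr_on; auto.
    - intros x Hx. apply cpt. apply Hqt; lra.
    - intros x Hx. exists (p x). split.
      + apply is_derive_ext_loc with q.
        * eapply filter_imp; [|apply (loc_int t0 t1 x ltac:(lra))].
          intros s Hs. rewrite (Hqte s Hs). reflexivity.
        * apply Derive_correct. apply Hqd; lra.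
      + left; apply Hpos; lra. }
  assert (Hrange : forall x, t0 < x < t1 -> 0 <= q x <= PI).
  { intros x Hx. rewrite <- (Hqte x Hx). rewrite <- Hqt0, <- Hqt1 at 1.
    split; apply Hmono; lra. }
  set (A := fun y => 2 * k * sin (y / 2) + sqrt (2 * e + 4 * sg * sin (y / 2) ^ 2)).
  assert (HA : forall y, ex_derive A y).
  { intros y. unfold A. auto_derive.
    assert (0 <= sin (y * / 2) ^ 2) by apply pow2_ge_0. nra. }
  assert (HAp : forall s, t0 < s < t1 -> A (qt s) = 2 * k * sin (q s / 2) + p s).
  { intros s Hs. rewrite (Hqte s Hs). unfold A. f_equal.
    rewrite <- (Hpp s Hs). fold p. apply sqrt_pow2. left; apply Hpos; auto. }
  assert (Hsc : forall x, t0 < x < t1 ->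
     0 <= sin (q x / 2) /\ 0 <= cos (q x / 2) /\ 1 - cos (q x / 2) <= sin (q x / 2)
     /\ 2 * k * sin (q x / 2) <= p x).
  { intros x Hx. destruct (Hrange x Hx) as [Hr1 Hr2]. assert (Hpi := PI_RGT_0).
    assert (Hs : 0 <= sin (q x / 2)) by (apply sin_ge_0; lra).
    assert (Hc' : 0 <= cos (q x / 2)) by (apply cos_ge_0; lra).
    assert (Hsc2 := sin2_cos2 (q x / 2)). unfold Rsqr in Hsc2.
    assert (Hp2 := Hpp x Hx). fold p in Hp2. assert (Hpx := Hpos x Hx).
    split; [auto|]. split; [auto|]. split; [nra|].
    assert (Hkk2 : (2 * k * sin (q x / 2)) ^ 2 <= p x ^ 2).
    { rewrite Hp2, <- Hkk. nra. }
    nra. }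
  assert (Hg1 := incr_on (fun s => - (A (qt s) * exp (- k * s))) t0 t1).
  assert (Hg2 := incr_on (fun s => A (qt s) * exp (qt s / 2) * exp (- k * s)) t0 t1).
  cbv beta in Hg1, Hg2. rewrite Hqt0, Hqt1 in Hg1, Hg2.
  assert (G1 : - (A 0 * exp (- k * t0)) <= - (A PI * exp (- k * t1))).
  { apply Hg1; [lra| |].
    - intros x Hx. apply cpt. apply (cont_opp (fun s => A (qt s) * exp (- k * s))).
      apply (cont_mul (fun s => A (qt s)) (fun s => exp (- k * s))).
      + apply (cont_comp_A A qt); [apply HA| apply Hqt; lra].
      + apply cont_exp_lin.
    - intros x Hx.
      exists (exp (- k * x) * k * (1 - cos (q x / 2)) * (2 * k * sin (q x / 2) + p x)).
      split.
      + apply is_derive_ext_loc with (fun s => - ((2 * k * sin (q s / 2) + p s) * exp (- k * s))).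
        * eapply filter_imp; [|apply (loc_int t0 t1 x Hx)].
          intros s Hs. rewrite (HAp s Hs). reflexivity.
        * auto_derive. { split; [apply Hqd; auto|]. split; [|auto]. eexists; apply Hpd; auto. }
          replace (Derive (fun x0 : R => q x0) x) with (p x) by reflexivity.
          replace (Derive (fun x0 : R => p x0) x) with (sg * sin (q x)) by (symmetry; apply is_derive_unique; apply Hpd; auto).
          rewrite (Hsin2 (q x)), <- Hkk. unfold Rdiv. field.
      + destruct (Hsc x Hx) as [H1 [H2 [H3 H4]]]. assert (Hpx := Hpos x Hx).
        assert (Hex := exp_pos (- k * x)).
        apply Rmult_le_pos; [|nra]. apply Rmult_le_pos; [nra|].
        assert (Hcb := COS_bound (q x / 2)). lra. }
  assert (G2 : A 0 * exp (0 / 2) * exp (- k * t0) <= A PI * exp (PI / 2) * exp (- k * t1)).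
  { apply Hg2; [lra| |].
    - intros x Hx. apply cpt.
      apply (cont_mul (fun s => A (qt s) * exp (qt s / 2)) (fun s => exp (- k * s)));
        [apply (cont_mul (fun s => A (qt s)) (fun s => exp (qt s / 2)))|].
      + apply (cont_comp_A A qt); [apply HA| apply Hqt; lra].
      + apply (cont_comp_A (fun y => exp (y / 2)) qt).
        * intros y. auto_derive. auto.
        * apply Hqt; auto.
      + apply cont_exp_lin.
    - intros x Hx.
      exists (exp (q x / 2) * exp (- k * x) * (2 * k * sin (q x / 2) + p x) * (k * cos (q x / 2) - k + p x / 2)).
      split.
      + apply is_derive_ext_loc with (fun s => (2 * k * sin (q s / 2) + p s) * exp (q s / 2) * exp (- k * s)).
        * eapply filter_imp; [|apply (loc_int t0 t1 x Hx)].
          intros s Hs. rewrite (HAp s Hs), (Hqte s Hs). reflexivity.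
        * auto_derive. { split; [apply Hqd; auto|]. split; [|auto]. eexists; apply Hpd; auto. }
          replace (Derive (fun x0 : R => q x0) x) with (p x) by reflexivity.
          replace (Derive (fun x0 : R => p x0) x) with (sg * sin (q x)) by (symmetry; apply is_derive_unique; apply Hpd; auto).
          rewrite (Hsin2 (q x)), <- Hkk. unfold Rdiv. field.
      + destruct (Hsc x Hx) as [H1 [H2 [H3 H4]]]. assert (Hpx := Hpos x Hx).
        assert (Hex := exp_pos (- k * x)). assert (Hex2 := exp_pos (q x / 2)).
        apply Rmult_le_pos; [|nra]. apply Rmult_le_pos; [|nra]. nra. }
  assert (HA0 : A 0 = sqrt (2 * e)).
  { unfold A. replace (0 / 2) with 0 by field. rewrite sin_0. replace (2 * e + 4 * sg * 0 ^ 2) with (2 * e) by ring. ring. }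
  assert (HApi : A PI = 2 * k + sqrt (2 * e + 4 * sg)).
  { unfold A. rewrite sin_PI2. replace (2 * e + 4 * sg * 1 ^ 2) with (2 * e + 4 * sg) by ring. ring. }
  replace (0 / 2) with 0 in G2 by field. rewrite exp_0 in G2.
  rewrite HA0, HApi in G1, G2.
  assert (Hsp : exp (- k * t1) = exp (- k * t0) * exp (- k * (t1 - t0))).
  { rewrite <- exp_plus. f_equal. ring. }
  rewrite Hsp in G1, G2.
  assert (He0 := exp_pos (- k * t0)).
  split; [auto|]. split.
  - apply (Rmult_le_reg_r (exp (- k * t0))); auto. nra.
  - apply (Rmult_le_reg_r (exp (- k * t0))); auto. nra.
Qed.

Lemma exp_le' x y : x <= y -> exp x <= exp y.
Proof. intros [H|H]; [left; apply exp_increasing; auto| subst; lra]. Qed.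

Theorem lemma2p2 (a eps : R) (ha : 0 < a) (heps : 0 < eps) :
  exists C : R, 0 < C /\
  exists C' : R, 1 < C' /\
  forall (n : nat) (t0 t1 : R) (q : R -> R) (e : R),
    (1 <= n)%nat ->
    t0 < t1 ->
    pendulum_EL_solution (sigma_n a n) t0 t1 q ->
    q t0 = 0 -> q t1 = PI ->
    (forall t, t0 < t < t1 -> ham (sigma_n a n) (q t) (Derive q t) = e) ->
    let omega1 := PI / (t1 - t0) in
    Rabs omega1 < Rpower (INR n) (- (a / 2) - eps) ->
    / C' * (sigma_n a n * exp (- (C * sqrt (sigma_n a n)) / Rabs omega1)) < e /\
    e < C' * (sigma_n a n * exp (- (C * sqrt (sigma_n a n)) / Rabs omega1)).
Proof.
  assert (Hpi := PI_RGT_0).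
  exists (2 * PI). split; [lra|].
  exists (32 * exp PI + 1). assert (HeP := exp_pos PI). split; [lra|].
  intros n t0 t1 q e Hn Ht Hsol Hq0 Hq1 Hen omega1 Hom.
  assert (HnR : 1 <= INR n) by (apply (le_INR 1); auto).
  set (sg := sigma_n a n) in *.
  assert (Hsg : 0 < sg) by (unfold sg, sigma_n, Rpower; apply exp_pos).
  set (k := sqrt sg).
  assert (Hk : 0 < k) by (apply sqrt_lt_R0; auto).
  assert (Hkk : k * k = sg) by (apply sqrt_sqrt; lra).
  destruct Hsol as [Hd Hc].
  assert (Hpp : forall t, t0 < t < t1 -> Derive q t ^ 2 = 2 * e + 4 * sg * sin (q t / 2) ^ 2).
  { intros t Htt. specialize (Hen t Htt). unfold ham in Hen.
    assert (Hcos : cos (q t) = 1 - 2 * sin (q t / 2) * sin (q t / 2))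
      by (rewrite <- cos_2a_sin; f_equal; field).
    rewrite Hcos in Hen. nra. }
  destruct (core sg k t0 t1 e q Hsg Hkk Hk Ht Hd Hc Hq0 Hq1 Hpp) as [He [G1 G2]].
  set (T := t1 - t0) in *.
  assert (HT : 0 < T) by (unfold T; lra).
  assert (Hom' : Rabs omega1 = PI / T).
  { unfold omega1. apply Rabs_right. left. apply Rdiv_lt_0_compat; lra. }
  assert (Hkexp : k = exp (- (a / 2) * ln (INR n))).
  { unfold k, sg, sigma_n, Rpower.
    replace (- a * ln (INR n)) with (- (a / 2) * ln (INR n) + - (a / 2) * ln (INR n)) by field.
    rewrite exp_plus. apply sqrt_square. left; apply exp_pos. }
  assert (Hln : 0 <= ln (INR n)) by (rewrite <- ln_1; apply ln_le; lra).
  assert (Hrk : Rpower (INR n) (- (a / 2) - eps) <= k).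
  { rewrite Hkexp. unfold Rpower. apply exp_le'. nra. }
  assert (HkT : PI < k * T).
  { assert (H1 : PI / T < k) by lra.
    apply (Rmult_lt_compat_r T) in H1; auto.
    replace (PI / T * T) with PI in H1 by (field; lra). lra. }
  rewrite Hom'. fold k.
  set (Y := exp (- k * T)) in *.
  assert (HY : 0 < Y) by (unfold Y; apply exp_pos).
  assert (Hexp : exp (- (2 * PI * k) / (PI / T)) = Y * Y).
  { unfold Y. rewrite <- exp_plus. f_equal. field. lra. }
  rewrite Hexp.
  set (r := sqrt (2 * e)) in *. set (w := sqrt (2 * e + 4 * sg)) in *.
  assert (Hr : r * r = 2 * e) by (apply sqrt_sqrt; lra).
  assert (Hw : w * w = 2 * e + 4 * sg) by (apply sqrt_sqrt; lra).
  assert (Hr0 : 0 <= r) by apply sqrt_pos.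
  assert (Hw0 : 0 <= w) by apply sqrt_pos.
  assert (Hw1 : 2 * k <= w) by nra.
  assert (Hw2 : w <= r + 2 * k) by (destruct (Rle_or_lt w (r + 2 * k)) as [Hq|Hq]; auto; exfalso; assert (Hq2 : (r + 2 * k) * (r + 2 * k) < w * w) by (apply Rmult_le_0_lt_compat; lra); nra).
  set (Z := exp (PI / 2) * Y).
  assert (HZ0 : 0 < Z) by (unfold Z; apply Rmult_lt_0_compat; auto; apply exp_pos).
  assert (HZ : Z <= / 2).
  { assert (HE2 : 2 < exp (PI / 2)).
    { assert (Hx := exp_ineq1 (PI / 2) ltac:(lra)). assert (H21 := PI2_1). lra. }
    assert (HZe : Z * exp (PI / 2) = exp (PI - k * T)).
    { unfold Z, Y. rewrite <- !exp_plus. f_equal. field. }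
    assert (Hlt : exp (PI - k * T) < 1).
    { rewrite <- exp_0. apply exp_increasing. lra. }
    nra. }
  assert (HeP2 : exp PI = exp (PI / 2) * exp (PI / 2)).
  { rewrite <- exp_plus. f_equal. field. }
  assert (Hlow : 4 * k * Y <= r) by (assert (2 * k * Y <= w * Y) by (apply Rmult_le_compat_r; lra); lra).
  assert (Hlow2 : 8 * sg * (Y * Y) <= e).
  { assert (16 * (k * k) * (Y * Y) <= r * r) by (apply Rsqr_incr_1 in Hlow; unfold Rsqr in Hlow; nra). nra. }
  assert (Hup : r <= 8 * k * Z).
  { assert (H1 : r <= (2 * k + w) * Z) by (unfold Z; nra).
    assert (H2 : r <= (4 * k + r) * Z) by nra. nra. }
  assert (Hup2 : e <= 32 * exp PI * sg * (Y * Y)).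
  { assert (H1 : r * r <= 64 * (k * k) * (Z * Z)) by nra.
    unfold Z in H1. nra. }
  assert (HsY : 0 < sg * (Y * Y)) by (apply Rmult_lt_0_compat; nra).
  split.
  - assert (HC : / (32 * exp PI + 1) < 1).
    { rewrite <- Rinv_1. apply Rinv_lt_contravar; lra. }
    nra.
  - nra.
Qed.
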